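(* Let $\gamma_2>0$. For every time step $t\ge1$, the first difference $\Delta L_3(t):=L_3(t+1)-L_3(t)$ of $$L_3(t)=\frac{1}{l_c\gamma_2}\operatorname{tr}\!\left[\big(\tilde w_c^{(1)}(t)\big)^T\tilde w_c^{(1)}(t)\right]$$ satisfies $$\Delta L_3(t)\le\frac1{\gamma_2}\Big(\alpha^2 l_c\, e_c(t)^2\,\|a(t)\|^2\|y(t)\|^2+\alpha\big(a(t)^T\tilde w_c^{(1)}(t)y(t)\big)^2+\alpha\, e_c(t)^2\Big),$$ where $e_c(t)=\alpha\hat w_c^{(2)}(t)\phi_c(t)+r(t)-\hat w_c^{(2)}(t-1)\phi_c(t-1)$.
   Context: Setting (action-dependent heuristic dynamic programming with two one-hidden-layer networks). Fix integers $m,n,N_a,N_c\ge1$, a discount factor $\alpha\in(0,1]$ and learning rates $l_c,l_a>0$. Let $\psi(s)=\frac{1-e^{-s}}{1+e^{-s}}$, applied componentwise to vectors (note $\psi'(s)=\tfrac12(1-\psi(s)^2)$). At each integer time $t$ there are a state $x(t)\in\mathbb R^m$ and a scalar reward $r(t)$. Action network: weights $\hat w_a^{(1)}(t)\in\mathbb R^{N_a\times m}$, $\hat w_a^{(2)}(t)\in\mathbb R^{n\times N_a}$; hidden output $\phi_a(t)=\psi(\hat w_a^{(1)}(t)x(t))\in\mathbb R^{N_a}$; control $u(t)=\hat w_a^{(2)}(t)\phi_a(t)\in\mathbb R^n$. Critic network: weights $\hat w_c^{(1)}(t)\in\mathbb R^{N_c\times(m+n)}$, $\hat w_c^{(2)}(t)\in\mathbb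 R^{1\times N_c}$ (a row vector); input $y(t)=(x(t)^T,u(t)^T)^T\in\mathbb R^{m+n}$; hidden output $\phi_c(t)=\psi(\hat w_c^{(1)}(t)y(t))\in\mathbb R^{N_c}$; output $\hat J(t)=\hat w_c^{(2)}(t)\phi_c(t)$. Critic error $e_c(t)=\alpha\hat J(t)+r(t)-\hat J(t-1)$. Auxiliary quantities: $C(t)\in\mathbb R^{N_c\times n}$ with $C_{ij}(t)=\tfrac12(1-\phi_{c_i}(t)^2)\,(\hat w_c^{(1)}(t))_{i,m+j}$; $a(t)\in\mathbb R^{N_c}$ with $a_i(t)=\tfrac12(1-\phi_{c_i}(t)^2)(\hat w_c^{(2)}(t))_i$; $D(t)\in\mathbb R^{N_a\times n}$ with $D_{ij}(t)=\tfrac12(1-\phi_{a_i}(t)^2)(\hat w_a^{(2)}(t))_{ji}$. The weights are updated by gradient descent: $\hat w_c^{(2)}(t+1)=\hat w_c^{(2)}(t)-l_c\alpha e_c(t)\phi_c(t)^T$, $\hat w_c^{(1)}(t+1)=\hat w_c^{(1)}(t)-l_c\alpha e_c(t)\,a(t)y(t)^T$, $\hat w_a^{(2)}(t+1)=\hat w_a^{(2)}(t)-l_a\hat J(t)\,(\hat w_c^{(2)}(t)C(t))^T\phi_a(t)^T$, $\hat w_a^{(1)}(t+1)=\hat w_a^{(1)}(t)-l_a\hat J(t)\,(\hat w_c^{(2)}(t)C(t)D(t)^T)^T x(t)^T$. Fixed (time-independent) ''optimal'' weights $w_c^{*(1)},w_c^{*(2)},w_a^{*(1)},w_a^{*(2)}$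 of the same shapes are given, and the estimation errors are $\tilde w_\bullet(t)=\hat w_\bullet(t)-w_\bullet^{*}$. Assumption 1: $\|w_a^*\|\le w_a^{\max}$ and $\|w_c^*\|\le w_c^{\max}$. Norms are Euclidean for vectors and Frobenius for matrices. *)

(* Defs.v *)
(* Stdlib reals (psi needs exp). Vectors/matrices are total functions
   on nat indices; only entries inside the stated dimensions are ever used. *)
From Stdlib Require Import Reals Lra Lia.
Open Scope R_scope.

Definition Vec := nat -> R.
Definition Mat := nat -> nat -> R.

Fixpoint rsum (n : nat) (f : nat -> R) : R :=
  match n with O => 0 | S k => rsum k f + f k end.

Definition psi (s : R) : R := (1 - exp (- s)) / (1 + exp (- s)).

Definition matmul (q : nat) (A B : Mat) : Mat :=
  fun i k => rsum q (fun j => A i j * B j k).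
Definition trmx (A : Mat) : Mat := fun i j => A j i.
Definition trace (n : nat) (A : Mat) : R := rsum n (fun i => A i i).
Definition vnorm (n : nat) (v : Vec) : R := sqrt (rsum n (fun i => v i ^ 2)).
Definition fnorm (p q : nat) (A : Mat) : R :=
  sqrt (rsum p (fun i => rsum q (fun j => A i j ^ 2))).

Section ADHDP.
Variables (m n Na Nc : nat) (alpha : R).
Variables (x : nat -> Vec) (r : nat -> R).
Variables (wa1 wa2 wc1 wc2 : nat -> Mat).
(* wa1 t : Na x m, wa2 t : n x Na, wc1 t : Nc x (m+n), wc2 t : 1 x Nc *)

Definition phi_a (t : nat) : Vec :=
  fun i => psi (rsum m (fun j => wa1 t i j * x t j)).
Definition u (t : nat) : Vec :=
  fun k => rsum Na (fun i => wa2 t k i * phi_a t i).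
Definition y (t : nat) : Vec :=
  fun k => if Nat.ltb k m then x t k else u t (k - m)%nat.
Definition phi_c (t : nat) : Vec :=
  fun i => psi (rsum (m + n)%nat (fun k => wc1 t i k * y t k)).
Definition Jhat (t : nat) : R := rsum Nc (fun i => wc2 t 0%nat i * phi_c t i).
(* used only for t >= 1 *)
Definition e_c (t : nat) : R := alpha * Jhat t + r t - Jhat (t - 1)%nat.
Definition Cmat (t : nat) : Mat :=
  fun i j => / 2 * (1 - phi_c t i ^ 2) * wc1 t i (m + j)%nat.
Definition avec (t : nat) : Vec :=
  fun i => / 2 * (1 - phi_c t i ^ 2) * wc2 t 0%nat i.
Definition Dmat (t : nat) : Mat :=
  fun i j => / 2 * (1 - phi_a t i ^ 2) * wa2 t j i.
(* row vector wc2 C (1 x n), and wc2 C D^T (1 x Na) *)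
Definition wcC (t : nat) : Vec :=
  fun k => rsum Nc (fun i => wc2 t 0%nat i * Cmat t i k).
Definition wcCD (t : nat) : Vec :=
  fun l => rsum n (fun k => wcC t k * Dmat t l k).
End ADHDP.

(* Main.v *)
Require Import Defs.
From Stdlib Require Import Reals.
From Stdlib Require Import Lra Lia.
Open Scope R_scope.

Lemma rsum_ext n f g : (forall i, (i < n)%nat -> f i = g i) -> rsum n f = rsum n g.
Proof. induction n; simpl; intros H; [reflexivity|]. rewrite IHn by (intros; apply H; lia). rewrite H by lia. reflexivity. Qed.
Lemma rsum_plus n f g : rsum n (fun i => f i + g i) = rsum n f + rsum n g.
Proof. induction n; simpl; [ring|]. rewrite IHn. ring. Qed.
Lemma rsum_scal n c f : rsum n (fun i => c * f i) = c * rsum n f.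
Proof. induction n; simpl; [ring|]. rewrite IHn. ring. Qed.
Lemma rsum_swap n p (f : nat -> nat -> R) :
  rsum n (fun i => rsum p (fun j => f i j)) = rsum p (fun j => rsum n (fun i => f i j)).
Proof. induction n; simpl.
 - induction p; simpl; [reflexivity|]. rewrite <- IHp. ring.
 - rewrite IHn, <- rsum_plus. reflexivity. Qed.
Lemma rsum_nonneg n f : (forall i, 0 <= f i) -> 0 <= rsum n f.
Proof. intros H; induction n; simpl; [lra|]. specialize (H n). lra. Qed.
Lemma vnorm_sq n v : vnorm n v ^ 2 = rsum n (fun i => v i ^ 2).
Proof. unfold vnorm. rewrite pow2_sqrt; [reflexivity|]. apply rsum_nonneg; intros; apply pow2_ge_0. Qed.

Theorem lemma3
  (m n Na Nc : nat) (alpha lc la gamma2 wa_max wc_max : R)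
  (x : nat -> Vec) (r : nat -> R)
  (wa1 wa2 wc1 wc2 : nat -> Mat)
  (wa1s wa2s wc1s wc2s : Mat)
  (Hm : (1 <= m)%nat) (Hn : (1 <= n)%nat) (HNa : (1 <= Na)%nat) (HNc : (1 <= Nc)%nat)
  (Halpha : 0 < alpha <= 1) (Hlc : 0 < lc) (Hla : 0 < la)
  (Hwa1s : fnorm Na m wa1s <= wa_max) (Hwa2s : fnorm n Na wa2s <= wa_max)
  (Hwc1s : fnorm Nc (m + n) wc1s <= wc_max) (Hwc2s : fnorm 1 Nc wc2s <= wc_max)
  (Hupd_c2 : forall t j, (j < Nc)%nat ->
     wc2 (S t) 0%nat j = wc2 t 0%nat j
       - lc * alpha * e_c m n Na Nc alpha x r wa1 wa2 wc1 wc2 t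
           * phi_c m n Na x wa1 wa2 wc1 t j)
  (Hupd_c1 : forall t i j, (i < Nc)%nat -> (j < m + n)%nat ->
     wc1 (S t) i j = wc1 t i j
       - lc * alpha * e_c m n Na Nc alpha x r wa1 wa2 wc1 wc2 t
           * avec m n Na x wa1 wa2 wc1 wc2 t i * y m Na x wa1 wa2 t j)
  (Hupd_a2 : forall t k l, (k < n)%nat -> (l < Na)%nat ->
     wa2 (S t) k l = wa2 t k l
       - la * Jhat m n Na Nc x wa1 wa2 wc1 wc2 t
           * wcC m n Na Nc x wa1 wa2 wc1 wc2 t k * phi_a m x wa1 t l)
  (Hupd_a1 : forall t l j, (l < Na)%nat -> (j < m)%nat ->
     wa1 (S t) l j = wa1 t l j
       - la * Jhat m n Na Nc x wa1 wa2 wc1 wc2 t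
           * wcCD m n Na Nc x wa1 wa2 wc1 wc2 t l * x t j)
  (Hgamma2 : 0 < gamma2) :
  let wtc1 := fun t i j => wc1 t i j - wc1s i j in
  let L3 := fun t => / (lc * gamma2) *
      trace (m + n) (matmul Nc (trmx (wtc1 t)) (wtc1 t)) in
  forall t : nat, (1 <= t)%nat ->
    let ec := e_c m n Na Nc alpha x r wa1 wa2 wc1 wc2 t in
    let a := avec m n Na x wa1 wa2 wc1 wc2 t in
    let yt := y m Na x wa1 wa2 t in
    L3 (S t) - L3 t <=
      / gamma2 * (alpha ^ 2 * lc * ec ^ 2 * vnorm Nc a ^ 2 * vnorm (m + n) yt ^ 2
        + alpha * (rsum Nc (fun i => a i * rsum (m + n) (fun j => wtc1 t i j * yt j))) ^ 2
        + alpha * ec ^ 2).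
Proof.
  intros wtc1 L3 t Ht ec a yt.
  set (c := lc * alpha * ec).
  set (A := rsum Nc (fun i => a i ^ 2)).
  set (Y := rsum (m + n) (fun k => yt k ^ 2)).
  set (s := rsum Nc (fun i => a i * rsum (m + n) (fun j => wtc1 t i j * yt j))).
  set (S0 := rsum (m + n) (fun k => rsum Nc (fun i => wtc1 t i k * wtc1 t i k))).
  assert (E1 : trace (m + n) (matmul Nc (trmx (wtc1 (S t))) (wtc1 (S t)))
     = S0 - 2 * c * s + c ^ 2 * (A * Y)).
  { unfold trace, matmul, trmx.
    rewrite (rsum_ext (m+n) _ (fun k => rsum Nc (fun i => wtc1 t i k * wtc1 t i k)
        + (-2 * c) * rsum Nc (fun i => a i * wtc1 t i k * yt k)
        + c ^ 2 * (yt k ^ 2 * rsum Nc (fun i => a i ^ 2)))).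
    2:{ intros k Hk. rewrite <- !rsum_scal, <- !rsum_plus. apply rsum_ext. intros i Hi.
        unfold wtc1. rewrite Hupd_c1 by lia. fold ec a yt. unfold c. ring. }
    rewrite !rsum_plus, !rsum_scal. unfold S0. fold A.
    replace (rsum (m + n) (fun i => yt i ^ 2 * A)) with (A * Y).
    2:{ unfold Y. rewrite <- rsum_scal. apply rsum_ext; intros; ring. }
    replace (rsum (m + n) (fun i => rsum Nc (fun i0 => a i0 * wtc1 t i0 i * yt i))) with s.
    2:{ unfold s. rewrite <- (rsum_swap Nc (m+n) (fun i j => a i * wtc1 t i j * yt j)).
        apply rsum_ext; intros. rewrite <- rsum_scal. apply rsum_ext; intros; ring. }
    ring. }
  assert (E0 : trace (m + n) (matmul Nc (trmx (wtc1 t)) (wtc1 t)) = S0) by reflexivity.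
  unfold L3. rewrite E1, E0. rewrite !vnorm_sq. fold A Y s.
  replace (/ (lc * gamma2) * (S0 - 2 * c * s + c ^ 2 * (A * Y)) - / (lc * gamma2) * S0)
    with (/ gamma2 * (- 2 * alpha * ec * s + lc * alpha ^ 2 * ec ^ 2 * (A * Y)))
    by (unfold c; field; lra).
  apply Rmult_le_compat_l. left; apply Rinv_0_lt_compat; lra.
  assert (0 <= alpha * (s + ec) ^ 2) by (apply Rmult_le_pos; [lra|apply pow2_ge_0]).
  nra.
Qed.
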